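(* Let $n\ge3$. For $i\ge -1$ let $\mathfrak{M}_i$ be the free $\mathbb{Z}$-module spanned by $\mathcal{N}_i$. Then each $\mathfrak{M}_i$ is a homogeneous subring of $\mathfrak{L}(n)$, and for every $i\ge 0$, \[\mathfrak{M}_i=N_{\mathfrak{L}(n)}(\mathfrak{M}_{i-1})=\mathfrak{N}_i.\]
   Context: Fix an integer $n\ge 3$. A partition is a sequence $\Lambda=(\lambda_j)_{j\ge1}$ of non-negative integers with finite support; $\mathrm{wt}(\Lambda)=\sum_j j\lambda_j$; $\mathrm{Part}(k)$ is the set of partitions with $\lambda_j=0$ for $j>k$. Write $x^\Lambda=\prod_j x_j^{\lambda_j}$, $\deg(x^\Lambda)=\sum_j\lambda_j$, and let $\partial_k$ be the partial derivative with respect to $x_k$. $\mathfrak{L}(n)$ is the free $\mathbb{Z}$-module with basis $\mathcal{B}=\{x^\Lambda\partial_k : 1\le k\le n,\ \Lambda\in\mathrm{Part}(k-1)\}$, a Lie ring with bracket defined on basis elements by $[x^\Lambda\partial_k,x^\Theta\partial_j]=\partial_j(x^\Lambda)x^\Theta\partial_k$ if $j<k$, $-x^\Lambda\partial_k(x^\Theta)\partial_j$ if $j>k$, $0$ if $j=k$, extended bilinearly. A Lie subring is homogeneous if it is the $\mathbb{Z}$-span of a subset of $\mathcal{B}$. For an integer $i\ge-1$, let $r_i\in\{1,\dots,n-1\}$ with $i\equiv r_i\pmod{n-1}$ and $h_i=\lfloor (i-1)/(n-1)\rfloor+1$ (so $i=(h_i-1)(n-1)+r_i$). For a basis element define $\mathrm{WD}(x^\Lambda\partial_k)=\mathrm{wt}(\Lambda)-\deg(x^\Lambda)+n-k$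 and $\mathrm{lev}_i(x^\Lambda\partial_k)=h_i\,\mathrm{WD}(x^\Lambda\partial_k)+\deg(x^\Lambda)-1$. For $i\ge -1$, $\mathcal{N}_i=\{b\in\mathcal{B} : \mathrm{lev}_j(b)\le j \text{ for some integer } j \text{ with } -1\le j\le i\}$. The idealizer of a subring $\mathfrak{M}$ is $N_{\mathfrak{L}(n)}(\mathfrak{M})=\{y\in\mathfrak{L}(n): [y,m]\in\mathfrak{M}\ \forall m\in\mathfrak{M}\}$. Define $\mathfrak{N}_{-1}=\mathbb{Z}\partial_1+\dots+\mathbb{Z}\partial_n$ and $\mathfrak{N}_i=N_{\mathfrak{L}(n)}(\mathfrak{N}_{i-1})$ for $i\ge0$. *)

(* Defs.v *)
From HB Require Import structures.
From mathcomp Require Import all_boot all_order all_algebra.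
From mathcomp Require Import finmap.
From mathcomp.multinomials Require Import monalg.
Set Implicit Arguments. Unset Strict Implicit. Unset Printing Implicit Defensive.
Import Order.TTheory GRing.Theory Num.Theory.
Local Open Scope ring_scope.

(* A basis element x^Lambda d_k is encoded as a pair (k, lam) with
   1 <= k <= n and lam a list of length k-1 with  lam`_(j-1) = lambda_j
   (j = 1..k-1).  This is a canonical encoding of Part(k-1). *)
Definition valid (n : nat) (x : nat * seq nat) : bool :=
  (1 <= x.1 <= n)%N && (size x.2 == x.1.-1).

Definition Bas (n : nat) := {x : nat * seq nat | valid n x}.

Definition L (n : nat) := {malg int[Bas n]}.

Definition bk n (b : Bas n) : nat := (val b).1.
Definition blam n (b : Bas n) : seq nat := (val b).2.

Definition mkterm n (c : int) (x : nat * seq nat) : L n :=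
  if (insub x : option (Bas n)) is Some b then << c *g b >> else 0.

(* bracket on basis elements:
   [x^L d_k, x^T d_j] = d_j(x^L) x^T d_k  (j < k)
                     = - x^L d_k(x^T) d_j (j > k)
                     = 0                  (j = k) *)
Definition brb n (a b : Bas n) : L n :=
  let k := bk a in let lam := blam a in
  let j := bk b in let th := blam b in
  if (j < k)%N then
    mkterm n (nth 0 lam j.-1)%:Z
      (k, [seq (nth 0 lam i - (i == j.-1)) + nth 0 th i | i <- iota 0 k.-1])%N
  else if (k < j)%N then
    mkterm n (- (nth 0 th k.-1)%:Z)
      (j, [seq nth 0 lam i + (nth 0 th i - (i == k.-1)) | i <- iota 0 j.-1])%N
  else 0.

Definition bracket n (u v : L n) : L n :=
  \sum_(a <- msupp u) \sum_(b <- msupp v) (u@_a * v@_b) *: brb a b.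

Definition wt n (b : Bas n) : nat :=
  (\sum_(i < size (blam b)) i.+1 * nth 0 (blam b) i)%N.
Definition degb n (b : Bas n) : nat := sumn (blam b).
Definition WD n (b : Bas n) : int :=
  (wt b)%:Z - (degb b)%:Z + n%:Z - (bk b)%:Z.
(* h_i = floor((i-1)/(n-1)) + 1 ; intdiv's %/ is floor division for
   positive divisors *)
Definition hh (n : nat) (i : int) : int := ((i - 1) %/ (n.-1)%:Z)%Z + 1.
Definition lev n (i : int) (b : Bas n) : int :=
  hh n i * WD b + (degb b)%:Z - 1.

Definition Nset n (i : int) (b : Bas n) : Prop :=
  exists j : int, -1 <= j <= i /\ lev j b <= j.

Definition seteq n (A B : L n -> Prop) : Prop := forall v, A v <-> B v.

Definition span n (S : Bas n -> Prop) (v : L n) : Prop :=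
  exists s : seq (int * Bas n),
    (forall p, p \in s -> S p.2) /\ v = \sum_(p <- s) << p.1 *g p.2 >>.

Definition lie_subring n (A : L n -> Prop) : Prop :=
  [/\ A 0,
      forall u v, A u -> A v -> A (u - v)
    & forall u v, A u -> A v -> A (bracket u v)].

Definition homogeneous n (A : L n -> Prop) : Prop :=
  exists S : Bas n -> Prop, seteq A (span S).

Definition idealizer n (A : L n -> Prop) (y : L n) : Prop :=
  forall m, A m -> A (bracket y m).

Definition Mfrak n (i : int) : L n -> Prop := span (@Nset n i).

(* Nfrak n m  is  \mathfrak{N}_{m-1}:  Nfrak n 0 = Z d_1 + ... + Z d_n,
   Nfrak n m.+1 = idealizer (Nfrak n m). *)
Fixpoint Nfrak n (m : nat) : L n -> Prop :=
  match m with
  | 0 => span (fun b : Bas n => all (fun x => x == 0)%N (blam b))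
  | m'.+1 => idealizer (@Nfrak n m')
  end.

Arguments Mfrak n i _ : clear implicits.
Arguments Nfrak n m _ : clear implicits.

(* Main.v *)
Require Import Defs.
From HB Require Import structures.
From mathcomp Require Import all_boot all_order all_algebra.
From mathcomp Require Import finmap.
From mathcomp.multinomials Require Import monalg.
From mathcomp Require Import zify.
From Stdlib Require Import Classical.
Import Order.TTheory GRing.Theory Num.Theory.
Local Open Scope ring_scope.
Set Implicit Arguments. Unset Strict Implicit.
Local Notation spanB := Defs.span.

Lemma spanP n (S : Bas n -> Prop) (v : L n) :
  spanB S v <-> (forall b, v@_b != 0 -> S b).
Proof.
split.
- case=> s [hs ->] b.
  rewrite raddf_sum /=.
  move=> nz; have: has (fun p : int * Bas n => p.2 == b) s.
    apply: contraNT nz => /hasPn H.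
    rewrite big_seq big1 // => p ps.
    by rewrite mcoeffU (negbTE (H p ps)) mulr0n.
  by case/hasP => p ps /eqP <-; apply: hs.
- move=> H; exists [seq (v@_b, b) | b <- msupp v]; split.
  + move=> p /mapP [b bs ->] /=; apply: H; by rewrite mcoeff_neq0.
  + by rewrite big_map /= -monalgE.
Qed.

Lemma span0 n (S : Bas n -> Prop) : spanB S 0.
Proof. by apply/spanP => b; rewrite mcoeff0 eqxx. Qed.

Lemma spanD n (S : Bas n -> Prop) u v : spanB S u -> spanB S v -> spanB S (u + v).
Proof.
move=> /spanP hu /spanP hv; apply/spanP => b; rewrite mcoeffD.
case: (eqVneq (u@_b) 0) => [->|/hu //]; rewrite add0r; exact: hv.
Qed.

Lemma spanN n (S : Bas n -> Prop) u : spanB S u -> spanB S (- u).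
Proof. by move=> /spanP hu; apply/spanP => b; rewrite mcoeffN oppr_eq0; apply: hu. Qed.

Lemma spanZ n (S : Bas n -> Prop) c u : spanB S u -> spanB S (c *: u).
Proof.
move=> /spanP hu; apply/spanP => b; rewrite mcoeffZ mulf_eq0 negb_or => /andP[_]; exact: hu.
Qed.

Lemma spanU n (S : Bas n -> Prop) c g : S g -> spanB S << c *g g >>.
Proof.
move=> Sg; apply/spanP => b; rewrite mcoeffU; case: (g =P b) => [<- //|_]. by rewrite mulr0n eqxx.
Qed.

Lemma span_sum n (S : Bas n -> Prop) (I : eqType) (r : seq I) (F : I -> L n) :
  (forall i, i \in r -> spanB S (F i)) -> spanB S (\sum_(i <- r) F i).
Proof.
elim: r => [|x r IH] H; first by rewrite big_nil; apply: span0.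
rewrite big_cons; apply: spanD; first by apply: H; rewrite inE eqxx.
by apply: IH => i ir; apply: H; rewrite inE ir orbT.
Qed.

Lemma bracket_span n (S T R : Bas n -> Prop) u v :
  spanB S u -> spanB T v -> (forall a b, S a -> T b -> spanB R (brb a b)) ->
  spanB R (bracket u v).
Proof.
move=> /spanP hu /spanP hv H; rewrite /bracket.
apply: span_sum => a; rewrite -mcoeff_neq0 => /hu Sa.
apply: span_sum => b; rewrite -mcoeff_neq0 => /hv Tb.
by apply: spanZ; apply: H.
Qed.


Definition gam n (b : Bas n) (p : nat) : int :=
  (nth 0%N (blam b) p)%:Z - ((p == (bk b).-1) : nat)%:Z.

Lemma bk_ge1 n (b : Bas n) : (1 <= bk b)%N.
Proof. by have /andP[/andP[]] := valP b. Qed.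
Lemma bk_len n (b : Bas n) : (bk b <= n)%N.
Proof. by have /andP[/andP[]] := valP b. Qed.
Lemma size_blam n (b : Bas n) : size (blam b) = (bk b).-1.
Proof. by have /andP[_ /eqP] := valP b. Qed.

Lemma mkterm_valid n c x (h : valid n x) : mkterm n c x = << c *g (Sub x h : Bas n) >>.
Proof. by rewrite /mkterm insubT. Qed.

Lemma nth_mapiota (f : nat -> nat) m p :
  nth 0%N [seq f i | i <- iota 0 m] p = if (p < m)%N then f p else 0%N.
Proof.
case: ltnP => h.
- by rewrite (nth_map 0%N) ?size_iota // nth_iota.
- by rewrite nth_default // size_map size_iota.
Qed.

Ltac fixb := repeat match goal with
  |- context [nat_of_bool (?x == ?y)] =>
    first [ rewrite (_ : (x == y) = false); [| by apply/negP => /eqP; lia]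
          | rewrite (_ : (x == y) = true); [| by apply/eqP; lia] ] end;
  rewrite /nat_of_bool /=.

Lemma brb_lt n (a m : Bas n) : (bk m < bk a)%N -> exists g : Bas n,
  brb a m = << (nth 0%N (blam a) (bk m).-1)%:Z *g g >> /\
  ((nth 0%N (blam a) (bk m).-1 != 0)%N -> forall p, gam g p = gam a p + gam m p).
Proof.
move=> lt; rewrite /brb lt.
set x := (_, _).
have hx : valid n x.
  by rewrite /valid /= size_map size_iota bk_ge1 bk_len eqxx.
exists (Sub x hx); split; first exact: mkterm_valid.
move=> nz p; rewrite /gam /bk /blam /= -/(bk a) -/(blam a) -/(bk m) -/(blam m).
have h1 := bk_ge1 m; have h2 := size_blam a; have h3 := size_blam m.
rewrite nth_mapiota.
case: ltnP => hp.
- case: (eqVneq p (bk m).-1) => [e|ne].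
  + rewrite e; fixb; move: nz; rewrite -e; case: (nth 0%N (blam a) p) => // q _.
    lia.
  + fixb; lia.
- rewrite !(@nth_default _ 0%N (blam a)) ?h2 //.
  rewrite !(@nth_default _ 0%N (blam m)) ?h3 //; last lia.
  fixb; lia.
Qed.

Lemma brb_gt n (a m : Bas n) : (bk a < bk m)%N -> exists g : Bas n,
  brb a m = << - (nth 0%N (blam m) (bk a).-1)%:Z *g g >> /\
  ((nth 0%N (blam m) (bk a).-1 != 0)%N -> forall p, gam g p = gam a p + gam m p).
Proof.
move=> lt; rewrite /brb ltnNge (ltnW lt) /= lt.
set x := (_, _).
have hx : valid n x.
  by rewrite /valid /= size_map size_iota bk_ge1 bk_len eqxx.
exists (Sub x hx); split; first exact: mkterm_valid.
move=> nz p; rewrite /gam /bk /blam /= -/(bk a) -/(blam a) -/(bk m) -/(blam m).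
have h1 := bk_ge1 a; have h2 := size_blam a; have h3 := size_blam m.
rewrite nth_mapiota.
case: ltnP => hp.
- case: (eqVneq p (bk a).-1) => [e|ne].
  + rewrite e; fixb; move: nz; rewrite -e; case: (nth 0%N (blam m) p) => // q _.
    lia.
  + fixb; lia.
- rewrite !(@nth_default _ 0%N (blam m)) ?h3 //.
  rewrite !(@nth_default _ 0%N (blam a)) ?h2 //; last lia.
  fixb; lia.
Qed.

Lemma brb_eq n (a m : Bas n) : bk a = bk m -> brb a m = 0.
Proof. by move=> e; rewrite /brb e ltnn. Qed.

Lemma gam_inj n (a b : Bas n) : (forall p, gam a p = gam b p) -> a = b.
Proof.
move=> H.
have ha1 := bk_ge1 a; have hb1 := bk_ge1 b.
have ha := size_blam a; have hb := size_blam b.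
have ek : bk a = bk b.
  have := H (bk a).-1; rewrite /gam eqxx nth_default ?ha //.
  case: eqP => [e|ne] /=; lia.
have el : blam a = blam b.
  apply: (@eq_from_nth _ 0%N); first by rewrite ha hb ek.
  move=> p _; have := H p; rewrite /gam ek; lia.
apply: val_inj; move: ek el; rewrite /bk /blam.
by case: (val a) => ? ?; case: (val b) => ? ? /= -> ->.
Qed.

Lemma sum_ind (F : nat -> int) q m : (q < m)%N ->
  \sum_(0 <= p < m) F p * ((p == q) : nat)%:Z = F q.
Proof.
elim: m => [//|m IH] lt; rewrite big_nat_recr //=.
case: (ltnP q m) => h.
- by rewrite IH // (_ : (m == q) = false) ?mulr0 ?addr0 //; apply/negP => /eqP; lia.
- have -> : q = m by lia.
  rewrite big1_seq ?eqxx ?mulr1 ?add0r // => p /andP[_]; rewrite mem_index_iota => /andP[_ hp].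
  by rewrite (_ : (p == m) = false) ?mulr0 //; apply/negP => /eqP; lia.
Qed.

Lemma sum_ind1 q m : (q < m)%N ->
  \sum_(0 <= p < m) ((p == q) : nat)%:Z = 1.
Proof. by move=> lt; rewrite -(sum_ind (fun _ => 1) lt); apply: eq_bigr => p _; rewrite mul1r. Qed.

Lemma sum_ext (F : nat -> int) m k : (m <= k)%N -> (forall p, (m <= p)%N -> F p = 0) ->
  \sum_(0 <= p < k) F p = \sum_(0 <= p < m) F p.
Proof.
move=> mk H; rewrite (@big_cat_nat _ _ _ m 0 k xpredT F (leq0n m) mk) /= [X in _ + X]big1_seq ?addr0 //.
by move=> p /andP[_]; rewrite mem_index_iota => /andP[hp _]; apply: H.
Qed.

Definition Wg n (b : Bas n) : int := \sum_(0 <= p < n) (p%:Z * gam b p) + (n.-1)%:Z.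
Definition eg n (b : Bas n) : int := \sum_(0 <= p < n) gam b p.

Lemma gam_out n (b : Bas n) p : (n <= p)%N -> gam b p = 0.
Proof.
move=> h; have := bk_len b; have := bk_ge1 b; have := size_blam b => s h1 h2.
rewrite /gam nth_default ?s; last lia.
rewrite (_ : (p == _) = false) //; apply/negP => /eqP; lia.
Qed.

Lemma eg_deg n (b : Bas n) : eg b = (degb b)%:Z - 1.
Proof.
have := bk_len b; have := bk_ge1 b; have := size_blam b => s h1 h2.
rewrite /eg /gam sumrB sum_ind1; last lia.
rewrite /degb sumnE (big_nth 0%N) -natz natr_sum.
under [X in _ = X - _]eq_bigr do rewrite natz.
congr (_ - _); apply: sum_ext; first by rewrite s; lia.
by move=> p hp; rewrite nth_default.
Qed.

Lemma deg_sum n (b : Bas n) : (degb b)%:Z = \sum_(0 <= p < n) (nth 0%N (blam b) p)%:Z.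
Proof.
have := bk_len b; have := bk_ge1 b; have := size_blam b => s h1 h2.
rewrite /degb sumnE (big_nth 0%N) -natz natr_sum.
under eq_bigr do rewrite natz.
apply/esym/sum_ext; first by rewrite s; lia.
by move=> p hp; rewrite nth_default.
Qed.

Lemma wt_sum n (b : Bas n) :
  (wt b)%:Z = \sum_(0 <= p < n) (p.+1)%:Z * (nth 0%N (blam b) p)%:Z.
Proof.
have := bk_len b; have := bk_ge1 b; have := size_blam b => s h1 h2.
rewrite /wt -(big_mkord xpredT (fun i => i.+1 * nth 0 (blam b) i)%N) -natz natr_sum.
under eq_bigr do rewrite natz PoszM.
apply/esym/sum_ext; first by rewrite s; lia.
by move=> p hp; rewrite (@nth_default _ _ (blam b) p) // mulr0.
Qed.

Lemma WD_Wg n (b : Bas n) : WD b = Wg b.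
Proof.
have := bk_len b; have := bk_ge1 b => h1 h2.
rewrite /WD /Wg /gam wt_sum deg_sum.
under [X in _ = X + _]eq_bigr do rewrite mulrBr.
rewrite sumrB (sum_ind (fun p => p%:Z)); last lia.
have -> : \sum_(0 <= p < n) (p.+1)%:Z * (nth 0%N (blam b) p)%:Z =
   \sum_(0 <= p < n) p%:Z * (nth 0%N (blam b) p)%:Z + \sum_(0 <= p < n) (nth 0%N (blam b) p)%:Z.
  by rewrite -big_split /=; apply: eq_bigr => p _; rewrite -[p.+1]addn1 PoszD mulrDl mul1r.
rewrite !predn_int //; last lia. set A := \sum_(0 <= p < n) (nth 0%N (blam b) p)%:Z. set B := \sum_(0 <= p < n) (p%:Z * _). lia.
Qed.


Definition charA (N A i W e : int) : Prop :=
  e <= 0 \/ e + A * W <= A * N \/ e + (A + 1) * W <= i.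

Lemma divz_bounds (m d : int) : 0 < d -> (m %/ d)%Z * d <= m < ((m %/ d)%Z + 1) * d.
Proof.
move=> d0; have := divz_eq m d; have := modz_ge0 m (lt0r_neq0 d0); have := ltz_pmod m d0.
lia.
Qed.

Lemma ar_char1 (N A i W e h j : int) : 2 <= N -> 0 <= i -> A*N <= i < (A+1)*N -> j <= i -> -1 <= j ->
 (h-1)*N <= j-1 < h*N -> h*W + e <= j -> 0 <= W -> charA N A i W e.
Proof.
rewrite /charA => *.
have h0 : 0 <= h by nia.
have hA : h <= A + 1 by nia.
case: (ltrP h (A+1)) => hh.
- case: (lerP W N) => hW; [right; left|left]; nia.
- right; right; nia.
Qed.

Lemma ar_h0 (N h : int) : 2 <= N -> (h-1)*N <= 0-1 < h*N -> h = 0.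
Proof. move=> *; nia. Qed.
Lemma ar_hm1 (N h : int) : 2 <= N -> (h-1)*N <= -1-1 < h*N -> h = 0.
Proof. move=> *; nia. Qed.
Lemma ar_hA (N A h : int) : 2 <= N -> 1 <= A -> (h-1)*N <= A*N-1 < h*N -> h = A.
Proof. move=> *; nia. Qed.
Lemma ar_hi (N A i h W : int) : 2 <= N -> 0 <= i -> A*N <= i < (A+1)*N -> 0 <= W ->
  (h-1)*N <= i-1 < h*N -> h * W <= (A+1) * W.
Proof. move=> *; have : h <= A + 1 by nia. nia. Qed.

Lemma ar_B (N A A' i Wb eb Wm em : int) :
  2 <= N -> 1 <= i -> A*N <= i < (A+1)*N -> A'*N <= i-1 < (A'+1)*N -> 0 <= A' ->
  0 <= Wb -> 0 <= Wm -> -1 <= eb -> -1 <= em ->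
  (eb = -1 -> Wb <= N) -> (eb = 0 -> Wb <= N-1) ->
  (em = -1 -> Wm <= N) -> (em = 0 -> Wm <= N-1) ->
  0 <= Wb + Wm - N ->
  charA N A i Wb eb -> charA N A' (i-1) Wm em ->
  charA N A' (i-1) (Wb + Wm - N) (eb + em).
Proof.
rewrite /charA => ? ? ? ? ? ? ? ? ? hb1 hb2 hm1 hm2 ? hb hm.
have hA : (A = A' \/ A = A' + 1) by nia.
have cb : (eb = -1 /\ Wb <= N) \/ (eb = 0 /\ Wb <= N-1) \/ 1 <= eb.
  case: (eqVneq eb (-1)) => [e|n1]; first by left; split => //; apply: hb1.
  case: (eqVneq eb 0) => [e|n0]; first by right; left; split => //; apply: hb2.
  by right; right; lia.
have cm : (em = -1 /\ Wm <= N) \/ (em = 0 /\ Wm <= N-1) \/ 1 <= em.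
  case: (eqVneq em (-1)) => [e|n1]; first by left; split => //; apply: hm1.
  case: (eqVneq em 0) => [e|n0]; first by right; left; split => //; apply: hm2.
  by right; right; lia.
clear hb1 hb2 hm1 hm2.
case: hA => E; subst A;
case: hb => [?|[?|?]]; case: hm => [?|[?|?]]; try nia. all: case: cb => [[? ?]|[[? ?]|?]]; case: cm => [[? ?]|[[? ?]|?]]; try nia.
Qed.

Lemma ar_C (N A A' i W e : int) :
  2 <= N -> 1 <= i -> A*N <= i < (A+1)*N -> A'*N <= i-1 < (A'+1)*N -> 0 <= A' -> 0 <= W ->
  ~ charA N A i W e -> ~ charA N A' (i-1) (W - 1) (e + A').
Proof.
rewrite /charA => ? ? ? ? ? ? H [?|[?|?]]; apply: H.
- nia.
- have hA : (A = A' \/ A = A' + 1) by nia.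
  case: hA => E; subst A; case: (lerP W N) => ?; nia.
- have hA : (A = A' \/ A = A' + 1) by nia.
  case: hA => E; subst A; case: (lerP W N) => ?; nia.
Qed.

Lemma ar_C1 (N A A' i e : int) :
  2 <= N -> 1 <= i -> A*N <= i < (A+1)*N -> A'*N <= i-1 < (A'+1)*N -> 0 <= A' ->
  ~ charA N A i 0 e -> ~ charA N A' (i-1) 0 (e - 1).
Proof.
rewrite /charA => ? ? ? ? ? H [?|[?|?]]; apply: H; nia.
Qed.

Lemma ar_m (N A' i : int) : charA N A' i (N - 1) A'.
Proof. rewrite /charA; right; left; lia. Qed.

Lemma ar_0 (N W e : int) : 0 <= W -> ~ charA N 0 0 W e -> 1 <= e.
Proof. rewrite /charA => ? H; case: (lerP 1 e) => // ?; case: H; left; lia. Qed.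


Lemma hh_bounds n (j : int) : (1 <= n.-1)%N ->
  (hh n j - 1) * (n.-1)%:Z <= j - 1 < hh n j * (n.-1)%:Z.
Proof.
move=> h; rewrite /hh addrK.
have := @divz_bounds (j - 1) (n.-1)%:Z; rewrite ltz_nat => /(_ h); lia.
Qed.

Lemma lev_eq n (j : int) (b : Bas n) : lev j b = hh n j * WD b + ((degb b)%:Z - 1).
Proof. by rewrite /lev addrA. Qed.

Lemma WD_ge0 n (b : Bas n) : 0 <= WD b.
Proof.
have := bk_len b => h2.
rewrite /WD wt_sum deg_sum.
have -> : \sum_(0 <= p < n) (p.+1)%:Z * (nth 0%N (blam b) p)%:Z =
   \sum_(0 <= p < n) p%:Z * (nth 0%N (blam b) p)%:Z + \sum_(0 <= p < n) (nth 0%N (blam b) p)%:Z.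
  by rewrite -big_split /=; apply: eq_bigr => p _; rewrite -[p.+1]addn1 PoszD mulrDl mul1r.
have : 0 <= \sum_(0 <= p < n) p%:Z * (nth 0%N (blam b) p)%:Z.
  by apply: sumr_ge0 => p _; apply: mulr_ge0.
set A := \sum_(0 <= p < n) (nth 0%N (blam b) p)%:Z.
set B := \sum_(0 <= p < n) (p%:Z * _).
lia.
Qed.

Lemma Nset_char n (b : Bas n) (i : int) : (3 <= n)%N -> 0 <= i ->
  Nset i b <-> charA (n.-1)%:Z (i %/ (n.-1)%:Z)%Z i (WD b) ((degb b)%:Z - 1).
Proof.
move=> hn hi.
have hN : 2 <= (n.-1)%:Z by lia.
have hA := @divz_bounds i (n.-1)%:Z; have {hA} hA : (i %/ (n.-1)%:Z)%Z * (n.-1)%:Z <= i < ((i %/ (n.-1)%:Z)%Z + 1) * (n.-1)%:Z by apply: hA; lia.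
have hW := WD_ge0 b.
split.
- case=> j [/andP[hj1 hj2]]; rewrite lev_eq => hl.
  have := @hh_bounds n j; rewrite (_ : (1 <= n.-1)%N = true); last lia.
  move=> /(_ isT) hb.
  apply: (@ar_char1 _ _ i _ _ (hh n j) j) => //.
- set A := (i %/ _)%Z; set N := (n.-1)%:Z; set W := WD b; set e := (_ - 1) in hA *.
  have hb := fun j => @hh_bounds n j; rewrite (_ : (1 <= n.-1)%N = true) in hb; last lia.
  have hA0 : 0 <= A by nia.
  rewrite /charA => hc.
  have case0 : e <= 0 -> Nset i b.
    move=> he; exists 0; split; first by apply/andP; split; lia.
    rewrite lev_eq; have := hb 0 isT; rewrite -/N => /(ar_h0 hN) ->; lia.
  case: hc => [hc|[hc|hc]]; first exact: case0 hc.
  + case: (eqVneq A 0) => [A0|An0].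
      by apply: case0; move: hc; rewrite A0; lia.
    exists (A * N); split; first by apply/andP; split; nia.
    rewrite lev_eq; have := hb (A * N) isT; rewrite -/N => /(ar_hA hN) -> //; last lia.
    rewrite -/W -/e; lia.
  + exists i; split; first by apply/andP; split; lia.
    rewrite lev_eq; have := hb i isT; rewrite -/N => /(ar_hi hN hi hA hW) H.
    rewrite -/W -/e; lia.
Qed.

Lemma Nset_m1 n (b : Bas n) : (3 <= n)%N -> Nset (-1) b <-> degb b = 0%N.
Proof.
move=> hn; have hN : 2 <= (n.-1)%:Z by lia.
have hb := fun j => @hh_bounds n j; rewrite (_ : (1 <= n.-1)%N = true) in hb; last lia.
split.
- case=> j [/andP[h1 h2]]; have -> : j = -1 by lia.
  rewrite lev_eq; have := hb (-1) isT => /(ar_hm1 hN) ->; lia.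
- move=> d0; exists (-1); split; first by [].
  rewrite lev_eq; have := hb (-1) isT => /(ar_hm1 hN) ->; rewrite d0; lia.
Qed.

Lemma Nset_mono n (b : Bas n) (i i' : int) : i <= i' -> Nset i b -> Nset i' b.
Proof. move=> h [j [/andP[h1 h2] h3]]; exists j; split => //; apply/andP; split; lia. Qed.

Lemma WD_sum n (b : Bas n) :
  WD b = \sum_(0 <= p < n) p%:Z * (nth 0%N (blam b) p)%:Z + n%:Z - (bk b)%:Z.
Proof.
rewrite /WD wt_sum deg_sum.
have -> : \sum_(0 <= p < n) (p.+1)%:Z * (nth 0%N (blam b) p)%:Z =
   \sum_(0 <= p < n) p%:Z * (nth 0%N (blam b) p)%:Z + \sum_(0 <= p < n) (nth 0%N (blam b) p)%:Z.
  by rewrite -big_split /=; apply: eq_bigr => p _; rewrite -[p.+1]addn1 PoszD mulrDl mul1r.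
set A := \sum_(0 <= p < n) (nth 0%N (blam b) p)%:Z.
set B := \sum_(0 <= p < n) (p%:Z * _).
lia.
Qed.

Lemma WD_bound n (b : Bas n) :
  WD b <= ((bk b)%:Z - 2) * (degb b)%:Z + n%:Z - (bk b)%:Z.
Proof.
rewrite WD_sum deg_sum mulr_sumr.
have := size_blam b => s.
suff : \sum_(0 <= p < n) p%:Z * (nth 0%N (blam b) p)%:Z <=
       \sum_(0 <= i < n) ((bk b)%:Z - 2) * (nth 0%N (blam b) i)%:Z.
  set A := \sum_(0 <= p < n) (p%:Z * _).
  set B := \sum_(0 <= p < n) (_ * _).
  lia.
apply: ler_sum => p _.
case: (ltnP p (size (blam b))) => hp.
- apply: ler_wpM2r => //; rewrite s in hp; lia.
- by rewrite nth_default // !mulr0.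
Qed.

Lemma WD_deg0 n (b : Bas n) : degb b = 0%N -> WD b <= (n.-1)%:Z.
Proof.
move=> d; have := WD_bound b; have := bk_ge1 b; have := bk_len b; rewrite d.
move=> h1 h2 h3; rewrite predn_int; lia.
Qed.

Lemma WD_deg1 n (b : Bas n) : degb b = 1%N -> WD b <= (n.-1)%:Z - 1.
Proof.
move=> d; have := WD_bound b; have := bk_ge1 b; have := bk_len b; rewrite d.
move=> h1 h2 h3; rewrite predn_int; lia.
Qed.

Lemma gam_add_W n (a m g : Bas n) : (forall p, gam g p = gam a p + gam m p) ->
  WD g = WD a + WD m - (n.-1)%:Z /\
  (degb g)%:Z - 1 = ((degb a)%:Z - 1) + ((degb m)%:Z - 1).
Proof.
move=> H; rewrite !WD_Wg -!eg_deg /Wg /eg; split.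
- under eq_bigr do rewrite H mulrDr; rewrite big_split /=.
  set A := \sum_(0 <= p < n) (p%:Z * gam a p).
  set B := \sum_(0 <= p < n) (p%:Z * gam m p).
  lia.
- by under eq_bigr do rewrite H; rewrite big_split.
Qed.

Lemma cons_m1 n (b : Bas n) : (degb b)%:Z - 1 = -1 -> WD b <= (n.-1)%:Z.
Proof. move=> h; apply: WD_deg0; lia. Qed.
Lemma cons_0 n (b : Bas n) : (degb b)%:Z - 1 = 0 -> WD b <= (n.-1)%:Z - 1.
Proof. move=> h; apply: WD_deg1; lia. Qed.

Lemma Nset_add n (i : int) (a m g : Bas n) : (3 <= n)%N -> 0 <= i ->
  (forall p, gam g p = gam a p + gam m p) -> Nset i a -> Nset (i-1) m -> Nset (i-1) g.
Proof.
move=> hn hi H ha hm.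
have [eW ed] := gam_add_W H.
have hN : 2 <= (n.-1)%:Z by lia.
case: (eqVneq i 0) => [i0|in0].
- subst i; move: hm; rewrite sub0r !Nset_m1 // => dm.
  move: ha; rewrite Nset_char // div0z /charA.
  have := WD_ge0 a; rewrite dm in ed; lia.
- have hi1 : 0 <= i - 1 by lia.
  move: ha hm; rewrite !Nset_char // => ha hm.
  have hA := @divz_bounds i (n.-1)%:Z; have {}hA := hA ltac:(lia).
  have hA' := @divz_bounds (i-1) (n.-1)%:Z; have {}hA' := hA' ltac:(lia).
  have hA'0 : 0 <= ((i - 1) %/ (n.-1)%:Z)%Z by nia.
  rewrite eW ed; apply: (ar_B (A := (i %/ (n.-1)%:Z)%Z)) => //.
  + lia.
  + exact: WD_ge0.
  + exact: WD_ge0.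
  + lia.
  + lia.
  + exact: cons_m1.
  + exact: cons_0.
  + exact: cons_m1.
  + exact: cons_0.
  + rewrite -eW; exact: WD_ge0.
Qed.

Lemma brb_span n (i : int) (a m : Bas n) : (3 <= n)%N -> 0 <= i ->
  Nset i a -> Nset (i-1) m -> spanB (@Nset n (i-1)) (brb a m).
Proof.
move=> hn hi ha hm.
case: (ltngtP (bk m) (bk a)) => h.
- have [g [-> Hg]] := brb_lt h.
  case: (eqVneq (nth 0%N (blam a) (bk m).-1) 0%N) => [z|nz].
    by rewrite z monalgU0; apply: span0.
  by apply: spanU; apply: (Nset_add hn hi (Hg nz)).
- have [g [-> Hg]] := brb_gt h.
  case: (eqVneq (nth 0%N (blam m) (bk a).-1) 0%N) => [z|nz].
    by rewrite z oppr0 monalgU0; apply: span0.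
  by apply: spanU; apply: (Nset_add hn hi (Hg nz)).
- by rewrite brb_eq //; apply: span0.
Qed.


Lemma brb_coef n (a m g : Bas n) : (brb a m)@_g != 0 ->
  forall p, gam g p = gam a p + gam m p.
Proof.
case: (ltngtP (bk m) (bk a)) => h.
- have [g' [-> Hg]] := brb_lt h; rewrite mcoeffU.
  case: (g' =P g) => [<-|]; last by rewrite mulr0n eqxx.
  by rewrite mulr1n eqz_nat => /Hg.
- have [g' [-> Hg]] := brb_gt h; rewrite mcoeffU.
  case: (g' =P g) => [<-|]; last by rewrite mulr0n eqxx.
  by rewrite mulr1n oppr_eq0 eqz_nat => /Hg.
- by rewrite brb_eq // mcoeff0 eqxx.
Qed.


Lemma xm_props n (a j : nat) (hj : (2 <= j <= n)%N)
  (hv : valid n (j, [seq (a * (q == 0%N) + (q == j.-2))%N | q <- iota 0 j.-1])) :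
  let m : Bas n := Sub _ hv in
  [/\ bk m = j, forall q, nth 0%N (blam m) q = (a * (q == 0%N) + (q == j.-2))%N,
      (degb m)%:Z = a%:Z + 1 & WD m = (n.-1)%:Z - 1].
Proof.
move=> m.
have hb : bk m = j by [].
have hl : forall q, nth 0%N (blam m) q = (a * (q == 0%N) + (q == j.-2))%N.
  move=> q; rewrite /blam /= nth_mapiota; case: ltnP => // hq.
  rewrite (_ : (q == 0%N) = false); last by apply/negP => /eqP; lia.
  rewrite (_ : (q == j.-2) = false); last by apply/negP => /eqP; lia.
  by rewrite muln0.
split => //.
- rewrite deg_sum; under eq_bigr do rewrite hl PoszD PoszM.
  rewrite big_split /= (sum_ind (fun _ => a%:Z)); last lia.
  rewrite sum_ind1 //; lia.
- rewrite WD_sum; under eq_bigr do rewrite hl PoszD PoszM mulrDr mulrA.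
  rewrite big_split /= (sum_ind (fun q => q%:Z * a%:Z)); last lia.
  rewrite (sum_ind (fun q => q%:Z)); last lia.
  rewrite hb mul0r add0r predn_int; last lia.
  lia.
Qed.

Lemma dpart_props n (j : nat) (hv : valid n (j, nseq j.-1 0%N)) :
  let m : Bas n := Sub _ hv in
  [/\ bk m = j, degb m = 0%N & WD m = n%:Z - j%:Z].
Proof.
move=> m; split => //.
- by rewrite /degb /= sumn_nseq.
- rewrite WD_sum big1 ?add0r // => q _.
  by rewrite /blam /= nth_nseq; case: ifP; rewrite mulr0.
Qed.

Lemma e_ge1 n (I : int) (b : Bas n) : (3 <= n)%N -> 0 <= I -> ~ Nset I b -> 1 <= (degb b)%:Z - 1.
Proof.
move=> hn hI; rewrite Nset_char // /charA => hb.
by case: (lerP 1 ((degb b)%:Z - 1)) => // h; case: hb; left; lia.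
Qed.

Lemma wit_xm n (I : int) (b m g : Bas n) : (3 <= n)%N -> 1 <= I -> ~ Nset I b ->
  WD m = (n.-1)%:Z - 1 -> (degb m)%:Z = ((I - 1) %/ (n.-1)%:Z)%Z + 1 ->
  (brb b m)@_g != 0 -> Nset (I - 1) m /\ ~ Nset (I - 1) g.
Proof.
move=> hn hI hb Wm dm nz.
have [eW ed] := gam_add_W (brb_coef nz).
have hN : 2 <= (n.-1)%:Z by lia.
have hA := @divz_bounds I (n.-1)%:Z; have {}hA := hA ltac:(lia).
have hA' := @divz_bounds (I-1) (n.-1)%:Z; have {}hA' := hA' ltac:(lia).
have hA'0 : 0 <= ((I - 1) %/ (n.-1)%:Z)%Z by nia.
split.
- rewrite Nset_char; [|lia|lia]; rewrite Wm.
  have -> : (degb m)%:Z - 1 = ((I - 1) %/ (n.-1)%:Z)%Z by lia.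
  exact: ar_m.
- rewrite Nset_char; [|lia|lia]; rewrite eW ed Wm dm.
  move: hb; rewrite Nset_char; [|lia|lia] => hb.
  have -> : WD b + ((n.-1)%:Z - 1) - (n.-1)%:Z = WD b - 1 by lia.
  have -> : (degb b)%:Z - 1 + (((I - 1) %/ (n.-1)%:Z)%Z + 1 - 1) =
            (degb b)%:Z - 1 + ((I - 1) %/ (n.-1)%:Z)%Z by lia.
  exact: (ar_C hN hI hA hA' hA'0 (WD_ge0 b) hb).
Qed.

Lemma wit_d1 n (I : int) (b m g : Bas n) : (3 <= n)%N -> 1 <= I -> ~ Nset I b ->
  WD b = 0 -> WD m = (n.-1)%:Z -> degb m = 0%N ->
  (brb b m)@_g != 0 -> Nset (I - 1) m /\ ~ Nset (I - 1) g.
Proof.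
move=> hn hI hb Wb Wm dm nz.
have [eW ed] := gam_add_W (brb_coef nz).
have hN : 2 <= (n.-1)%:Z by lia.
have hA := @divz_bounds I (n.-1)%:Z; have {}hA := hA ltac:(lia).
have hA' := @divz_bounds (I-1) (n.-1)%:Z; have {}hA' := hA' ltac:(lia).
have hA'0 : 0 <= ((I - 1) %/ (n.-1)%:Z)%Z by nia.
split.
- apply: (@Nset_mono _ _ (-1)); first lia.
  by rewrite Nset_m1.
- rewrite Nset_char; [|lia|lia]; rewrite eW ed Wm Wb dm.
  move: hb; rewrite Nset_char; [|lia|lia]; rewrite Wb => hb.
  have -> : 0 + (n.-1)%:Z - (n.-1)%:Z = 0 by lia.
  have -> : (degb b)%:Z - 1 + ((0%N)%:Z - 1) = (degb b)%:Z - 1 - 1 by lia.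
  exact: (ar_C1 hN hI hA hA' hA'0 hb).
Qed.

Lemma wit_0 n (b m g : Bas n) : (3 <= n)%N -> ~ Nset 0 b ->
  degb m = 0%N -> (brb b m)@_g != 0 -> Nset (0 - 1) m /\ ~ Nset (0 - 1) g.
Proof.
move=> hn hb dm nz.
have [eW ed] := gam_add_W (brb_coef nz).
have he := e_ge1 hn (lexx 0) hb.
rewrite sub0r !Nset_m1 //; split => // dg.
move: ed; rewrite dg dm; lia.
Qed.

Lemma witness n (i : nat) (b : Bas n) : (3 <= n)%N -> ~ Nset i%:Z b ->
  exists m g, Nset (i%:Z - 1) m /\ (brb b m)@_g != 0 /\ ~ Nset (i%:Z - 1) g.
Proof.
move=> hn hb.
have hk1 := bk_ge1 b; have hkn := bk_len b; have hs := size_blam b.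
have h0 : 0 <= i%:Z by lia.
have he := e_ge1 hn h0 hb.
clear h0; case: i hb he => [|i] hb he.
- have [p [hp nz]] : exists p, (p < size (blam b))%N /\ nth 0%N (blam b) p != 0%N.
    case: (boolP (has (fun x => x != 0%N) (blam b))) => H.
      case/hasP: H => x xin nx; exists (index x (blam b)).
      by rewrite index_mem nth_index.
    exfalso; suff : degb b = 0%N by move=> d; move: he; rewrite d; lia.
    rewrite /degb sumnE big1_seq // => x /andP[_ xin]; apply/eqP.
    by move/hasPn: H => /(_ x xin); rewrite negbK.
  have hv : valid n (p.+1, nseq p.+1.-1 0%N).
    by rewrite /valid /= size_nseq eqxx andbT; lia.
  have [hbk hd hw] := dpart_props hv.
  have hlt : (bk (Sub _ hv : Bas n) < bk b)%N by rewrite hbk; lia.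
  have [g [E Hg]] := brb_lt hlt.
  have nz' : (brb b (Sub _ hv))@_g != 0 by rewrite E mcoeffUU hbk /= eqz_nat.
  have [h1 h2] := wit_0 hn hb hd nz'.
  by exists (Sub _ hv), g.
- set I := (i.+1)%:Z in hb *.
  have hI : 1 <= I by rewrite /I; lia.
  have hN : 2 <= (n.-1)%:Z by lia.
  have hA' := @divz_bounds (I-1) (n.-1)%:Z; have {}hA' := hA' ltac:(lia).
  have hA'0 : 0 <= ((I - 1) %/ (n.-1)%:Z)%Z by nia.
  set A' := ((I - 1) %/ (n.-1)%:Z)%Z in hA' hA'0.
  have [a ha] : exists a : nat, a%:Z = A' by exists `|A'|%N; rewrite gez0_abs.
  case: (ltnP (bk b) n) => hk.
  + have hv : valid n ((bk b).+1,
        [seq (a * (q == 0%N) + (q == (bk b).+1.-2))%N | q <- iota 0 (bk b).+1.-1]).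
      by rewrite /valid /= size_map size_iota eqxx andbT; lia.
    have hj : (2 <= (bk b).+1 <= n)%N by apply/andP; split; lia.
    have [hbk hl hd hw] := xm_props hj hv.
    have hgt : (bk b < bk (Sub _ hv : Bas n))%N by rewrite hbk.
    have [g [E Hg]] := brb_gt hgt.
    have nz' : (brb b (Sub _ hv))@_g != 0.
      rewrite E mcoeffUU oppr_eq0 eqz_nat hl /=.
      by rewrite (_ : (bk b).-1 == (bk b).-1) ?eqxx // addn1.
    have [h1 h2] := wit_xm hn hI hb hw (ltac:(rewrite hd ha; lia)) nz'.
    by exists (Sub _ hv), g.
  + have kn : bk b = n by lia.
    case: (boolP (has (fun p => nth 0%N (blam b) p != 0%N) (iota 1 n.-2))) => H.
    * case/hasP: H => p; rewrite mem_iota => /andP[p1 p2] nzp.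
      have hv : valid n (p.+1,
          [seq (a * (q == 0%N) + (q == p.+1.-2))%N | q <- iota 0 p.+1.-1]).
        by rewrite /valid /= size_map size_iota eqxx andbT; lia.
      have hj : (2 <= p.+1 <= n)%N by apply/andP; split; lia.
      have [hbk hl hd hw] := xm_props hj hv.
      have hlt : (bk (Sub _ hv : Bas n) < bk b)%N by rewrite hbk; lia.
      have [g [E Hg]] := brb_lt hlt.
      have nz' : (brb b (Sub _ hv))@_g != 0 by rewrite E mcoeffUU hbk /= eqz_nat.
      have [h1 h2] := wit_xm hn hI hb hw (ltac:(rewrite hd ha; lia)) nz'.
      by exists (Sub _ hv), g.
    * have z : forall p, (0 < p)%N -> nth 0%N (blam b) p = 0%N.
        move=> p p0; case: (ltnP p n.-1) => pn.
          by apply/eqP; move/hasPn: H => /(_ p); rewrite mem_iota negbK; apply; lia.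
        by rewrite nth_default // hs kn.
      have Wb : WD b = 0.
        rewrite WD_sum big1 ?add0r; first by rewrite kn; lia.
        by move=> p _; case: p => [|p]; rewrite ?mul0r // z // mulr0.
      have nz0 : nth 0%N (blam b) 0 != 0%N.
        apply/negP => /eqP z0; move: he; rewrite deg_sum big1; first lia.
        by move=> p _; case: p => [|p]; rewrite ?z0 ?z.
      have hv : valid n (1%N, nseq 1.-1 0%N).
        by rewrite /valid /= eqxx andbT; lia.
      have [hbk hd hw] := dpart_props hv.
      have hlt : (bk (Sub _ hv : Bas n) < bk b)%N by rewrite hbk; lia.
      have [g [E Hg]] := brb_lt hlt.
      have nz' : (brb b (Sub _ hv))@_g != 0 by rewrite E mcoeffUU hbk /= eqz_nat.
      have hw' : WD (Sub _ hv : Bas n) = (n.-1)%:Z by rewrite hw predn_int; lia.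
      have [h1 h2] := wit_d1 hn hI hb Wb hw' hd nz'.
      by exists (Sub _ hv), g.
Qed.


Lemma ideal_sub n (i : nat) (y : L n) : (3 <= n)%N ->
  idealizer (Mfrak n (i%:Z - 1)) y -> spanB (@Nset n i%:Z) y.
Proof.
move=> hn hy; apply/spanP => b yb.
case: (classic (Nset i%:Z b)) => // nb.
have [m [g [hm [nz ng]]]] := witness hn nb.
exfalso; apply: ng.
have := hy << 1 *g m >> (spanU 1 hm).
move/spanP => /(_ g); apply.
rewrite [bracket _ _]/bracket.
have -> : msupp << (1:int) *g m >> = [fset m]%fset by rewrite msuppU.
under eq_bigr do rewrite big_seq_fset1 mcoeffUU mulr1.
rewrite raddf_sum /=.
rewrite (bigD1_seq b) /=; [| by rewrite -mcoeff_neq0 | exact: fset_uniq].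
rewrite [X in X + _]mcoeffZ.
have -> : \sum_(i0 <- msupp y | i0 != b) (y@_i0 *: brb i0 m)@_g = 0.
  apply: big1 => a ab; rewrite mcoeffZ.
  case: (eqVneq ((brb a m)@_g) 0) => [->|nz']; first by rewrite mulr0.
  exfalso; move/eqP: ab; apply.
  apply: gam_inj => p.
  have := brb_coef nz p; have := brb_coef nz' p; lia.
rewrite addr0 mulf_neq0 // -mcoeff_neq0 //.
Qed.

Lemma span_ext n (S T : Bas n -> Prop) : (forall b, S b <-> T b) -> seteq (spanB S) (spanB T).
Proof.
move=> H v; split => /spanP h; apply/spanP => b /h; exact: (H b).1 || exact: (H b).2.
Qed.

Lemma ideal_ext n (A B : L n -> Prop) : seteq A B -> seteq (idealizer A) (idealizer B).
Proof.
move=> H y; split => hy m hm.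
- by apply/H; apply: hy; apply/H.
- by apply/H; apply: hy; apply/H.
Qed.

Lemma seteq_trans n (A B C : L n -> Prop) : seteq A B -> seteq B C -> seteq A C.
Proof. by move=> h1 h2 v; rewrite h1 h2. Qed.

Lemma ideal_sup n (i : int) (y : L n) : (3 <= n)%N -> 0 <= i ->
  Mfrak n i y -> idealizer (Mfrak n (i - 1)) y.
Proof.
move=> hn hi hy m hm; apply: (bracket_span hy hm) => a b ha hb.
exact: brb_span.
Qed.

Lemma sumn_eq0_all (l : seq nat) : (sumn l == 0%N) = all (fun x => x == 0%N) l.
Proof. by elim: l => //= x l <-; rewrite addn_eq0. Qed.

Lemma part2a n (i : nat) : (3 <= n)%N ->
  seteq (Mfrak n i%:Z) (idealizer (Mfrak n (i%:Z - 1))).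
Proof.
move=> hn y; split; first by apply: ideal_sup => //; lia.
exact: ideal_sub.
Qed.

Lemma Nfrak_eq n (i : nat) : (3 <= n)%N -> seteq (Nfrak n i) (Mfrak n (i%:Z - 1)).
Proof.
move=> hn; elim: i => [|i IH].
- apply: span_ext => b; rewrite sub0r Nset_m1 // -sumn_eq0_all.
  by rewrite /degb; split => [/eqP|->].
- apply: (seteq_trans (ideal_ext IH)).
  have -> : (i.+1)%:Z - 1 = i%:Z by lia.
  by move=> v; rewrite (part2a i hn v).
Qed.

Theorem theorem3p4 (n : nat) (hn : (3 <= n)%N) :
  (forall i : int, -1 <= i ->
     lie_subring (Mfrak n i) /\ homogeneous (Mfrak n i)) /\
  (forall i : nat,
     seteq (Mfrak n i%:Z) (idealizer (Mfrak n (i%:Z - 1))) /\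
     seteq (idealizer (Mfrak n (i%:Z - 1))) (Nfrak n i.+1)).
Proof.
split.
- move=> i hi; split; last by exists (@Nset n i).
  split.
  + exact: span0.
  + by move=> u v hu hv; apply: spanD => //; apply: spanN.
  + move=> u v hu hv; apply: (bracket_span hu hv) => a b ha hb.
    have := @brb_span n (i + 1) a b hn ltac:(lia).
    rewrite addrK; apply => //.
    by apply: (Nset_mono _ ha); lia.
- move=> i; split; first exact: part2a.
  move=> v; rewrite /=; apply: ideal_ext => w.
  by rewrite (Nfrak_eq i hn w).
Qed.
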